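(* Let $p\in[1,2]$, $p^*=\frac{p}{p-1}$ ($p^*=\infty$ if $p=1$), and let $m\ge2$ be an integer. Then for every $N\in\mathbb{N}$ and every real array $(y_{i_1\dots i_m})_{i_1,\dots,i_m=1}^N$, \[ \left(\sum_{i_1,\dots,i_m=1}^N|y_{i_1\dots i_m}|^2\right)^{1/2}\le D_{(m+1),p^*}\left(\int_{[0,1]^m}\left|\sum_{i_1,\dots,i_m=1}^N r_{i_1}(t_1)\cdots r_{i_m}(t_m)y_{i_1\dots i_m}\right|^p dt_1\cdots dt_m\right)^{1/p}. \] Consequently $(\mathrm{A}_p)^m\le D_{(m+1),p^*}$.
   Context: Scalars are real. $X_q=\ell_q$ for $1\le q<\infty$, $X_\infty=c_0$, $(e_k)$ canonical unit vectors; $\|T\|$ is the supremum of $|T(x^{(1)},\dots,x^{(M)})|$ over the product of the closed unit balls. $r_j(t)=\operatorname{sign}(\sin(2^j\pi t))$ are the Rademacher functions. For $0<r<\infty$, $\mathrm{A}_r$ is the optimal constant such that $\left(\sum_{j=1}^n|a_j|^2\right)^{1/2}\le \mathrm{A}_r\left(\int_0^1|\sum_{j=1}^n a_jr_j(t)|^rdt\right)^{1/r}$ for all $n$ and real $a_j$. For an integer $M\ge3$ and $q\in[2,\infty]$, $D_{(M),q}$ denotes the optimal constant $D$ such that $\left(\sum_{i_2,\dots,i_M}\left(\sum_{i_1}|T(e_{i_1},\dots,e_{i_M})|^{\frac{q}{q-1}}\right)^{2\frac{q-1}{q}}\right)^{1/2}\le D\|T\|$ for all continuous $M$-linear $T:X_q\times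 X_\infty\times\cdots\times X_\infty\to\mathbb{R}$ ($q/(q-1)$ read as $1$ when $q=\infty$). *)

(* Defs.v *)
From Stdlib Require Import Reals Lra.
Open Scope R_scope.

(* x^r for x >= 0 and r > 0, with 0^r = 0 (Rpower alone gives Rpower 0 r = 1). *)
Definition pw (x r : R) : R := if Rle_dec x 0 then 0 else Rpower x r.

Fixpoint fsum (n : nat) (f : nat -> R) : R :=
  match n with O => 0 | S n' => fsum n' f + f n' end.
Fixpoint fprod (n : nat) (f : nat -> R) : R :=
  match n with O => 1 | S n' => fprod n' f * f n' end.

Definition scons {A : Type} (a : A) (s : nat -> A) : nat -> A :=
  fun j => match j with O => a | S j' => s j' end.

(* sum over multi-indices i = (i_0,...,i_{k-1}) with all i_j < n
   (coordinates >= k are set to 0) *)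
Fixpoint msum (k n : nat) (f : (nat -> nat) -> R) : R :=
  match k with
  | O => f (fun _ => O)
  | S k' => fsum n (fun a => msum k' n (fun i => f (scons a i)))
  end.

Definition Rsign (x : R) : R :=
  if Rlt_dec 0 x then 1 else if Rlt_dec x 0 then -1 else 0.
Definition rad (j : nat) (t : R) : R := Rsign (sin (2 ^ j * PI * t)).

Definition RInt01 (g : R -> R) (I : R) : Prop :=
  exists pr : Riemann_integrable g 0 1, RiemannInt pr = I.

Fixpoint IterInt (m : nat) (F : (nat -> R) -> R) (I : R) : Prop :=
  match m with
  | O => F (fun _ => 0) = I
  | S m' => exists g : R -> R, RInt01 g I /\
      forall t, 0 <= t <= 1 -> IterInt m' (fun s => F (scons t s)) (g t)
  end.

Definition A_valid (r A : R) : Prop :=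
  forall (n : nat) (a : nat -> R) (I : R),
    RInt01 (fun t => pw (Rabs (fsum n (fun k => a (S k) * rad (S k) t))) r) I ->
    sqrt (fsum n (fun k => a (S k) ^ 2)) <= A * pw I (1 / r).
Definition A_opt (r A : R) : Prop :=
  A_valid r A /\ forall A', A_valid r A' -> A <= A'.

Inductive qexp := Fin (q : R) | Inf.
Definition conj_exp (p : R) : qexp :=
  if Req_dec_T p 1 then Inf else Fin (p / (p - 1)).
Definition dual_exp (q : qexp) : R :=
  match q with Fin q => q / (q - 1) | Inf => 1 end.

(* the spaces X_q (ell_q, or c_0 for q = infinity) and their closed unit balls *)
Definition inX (q : qexp) (x : nat -> R) : Prop :=
  match q with
  | Fin q => exists l, infinite_sum (fun k => pw (Rabs (x k)) q) l
  | Inf => Un_cv x 0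
  end.
Definition inBall (q : qexp) (x : nat -> R) : Prop :=
  match q with
  | Fin q => exists l, infinite_sum (fun k => pw (Rabs (x k)) q) l /\ l <= 1
  | Inf => Un_cv x 0 /\ forall k, Rabs (x k) <= 1
  end.

(* slot j of T : X_q x X_oo x ... x X_oo *)
Definition slot (q : qexp) (j : nat) : qexp := match j with O => q | _ => Inf end.

Definition upd (x : nat -> nat -> R) (j : nat) (w : nat -> R) : nat -> nat -> R :=
  fun k => if Nat.eqb k j then w else x k.

(* M-linear forms T, argument x j = j-th vector (j < M) *)
Definition multilinear (M : nat) (q : qexp) (T : (nat -> nat -> R) -> R) : Prop :=
  (forall x x', (forall j, (j < M)%nat -> x j = x' j) -> T x = T x') /\
  (forall (j : nat) (x : nat -> nat -> R) (u v : nat -> R) (a b : R),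
     (j < M)%nat ->
     (forall k, (k < M)%nat -> k <> j -> inX (slot q k) (x k)) ->
     inX (slot q j) u -> inX (slot q j) v ->
     T (upd x j (fun i => a * u i + b * v i)) = a * T (upd x j u) + b * T (upd x j v)).

(* continuity of a multilinear form = boundedness on the product of unit balls *)
Definition bounded_form (M : nat) (q : qexp) (T : (nat -> nat -> R) -> R) : Prop :=
  exists C, forall x, (forall j, (j < M)%nat -> inBall (slot q j) (x j)) -> Rabs (T x) <= C.

Definition normT (M : nat) (q : qexp) (T : (nat -> nat -> R) -> R) (s : R) : Prop :=
  is_lub (fun v => exists x, (forall j, (j < M)%nat -> inBall (slot q j) (x j)) /\ v = Rabs (T x)) s.

Definition e (k : nat) : nat -> R := fun i => if Nat.eqb i k then 1 else 0.

(* truncation (all indices < n) of the mixed-norm expression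
   ( sum_{i_2..i_M} ( sum_{i_1} |T(e_{i_1},...,e_{i_M})|^{q'} )^{2/q'} )^{1/2} *)
Definition mixed_trunc (M : nat) (q : qexp) (T : (nat -> nat -> R) -> R) (n : nat) : R :=
  let q' := dual_exp q in
  pw (msum (M - 1) n (fun i' =>
        pw (fsum n (fun i1 => pw (Rabs (T (fun j => e (scons i1 i' j)))) q')) (2 / q')))
     (1 / 2).

(* D valid: the (possibly infinite) sum is <= D ||T|| ; for nonnegative terms this
   is the same as all truncations being <= D ||T|| *)
Definition D_valid (M : nat) (q : qexp) (D : R) : Prop :=
  forall T, multilinear M q T -> bounded_form M q T ->
  forall s, normT M q T s -> forall n, mixed_trunc M q T n <= D * s.
Definition D_opt (M : nat) (q : qexp) (D : R) : Prop :=
  D_valid M q D /\ forall D', D_valid M q D' -> D <= D'.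

(* Main.v *)
Require Import Defs.
From Stdlib Require Import Reals.
From Stdlib Require Import Lra Lia Psatz FunctionalExtensionality.
From Coquelicot Require Import Coquelicot.
Open Scope R_scope.

Lemma fsum_ext n f g : (forall a, (a<n)%nat -> f a = g a) -> fsum n f = fsum n g.
Proof. induction n; simpl; intros H; [reflexivity|]. rewrite IHn, H; auto. Qed.

Lemma fsum_lin n c d f g : fsum n (fun a => c * f a + d * g a) = c * fsum n f + d * fsum n g.
Proof. induction n; simpl; [ring|]. rewrite IHn; ring. Qed.

Lemma fsum_plus n f g : fsum n (fun a => f a + g a) = fsum n f + fsum n g.
Proof. induction n; simpl; [ring|]. rewrite IHn; ring. Qed.

Lemma fsum_scal n c f : fsum n (fun a => c * f a) = c * fsum n f.
Proof. induction n; simpl; [ring|]. rewrite IHn; ring. Qed.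

Lemma fsum_le n f g : (forall a, (a<n)%nat -> f a <= g a) -> fsum n f <= fsum n g.
Proof. induction n; simpl; intros H; [lra|]. pose proof (H n (Nat.lt_succ_diag_r n)).
  assert (fsum n f <= fsum n g) by (apply IHn; auto). lra. Qed.

Lemma fsum_nonneg n f : (forall a, (a<n)%nat -> 0 <= f a) -> 0 <= fsum n f.
Proof. intros H. replace 0 with (fsum n (fun _ => 0)). apply fsum_le; auto.
  induction n; simpl; auto. rewrite IHn; [ring|]. auto. Qed.

Lemma fsum_abs n f : Rabs (fsum n f) <= fsum n (fun a => Rabs (f a)).
Proof. induction n; simpl. rewrite Rabs_R0; lra.
  eapply Rle_trans. apply Rabs_triang. lra. Qed.

Lemma fsum_double n f : fsum (2*n) f = fsum n (fun d => f (2*d)%nat + f (2*d+1)%nat).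
Proof. induction n. reflexivity.
  replace (2 * S n)%nat with (S (S (2*n))) by lia. change (fsum (S (S (2*n))) f) with (fsum (2*n) f + f (2*n)%nat + f (S (2*n))).
  change (fsum (S n) (fun d => f (2*d)%nat + f (2*d+1)%nat)) with (fsum n (fun d => f (2*d)%nat + f (2*d+1)%nat) + (f (2*n)%nat + f (2*n+1)%nat)).
  rewrite IHn.
  replace (2 * n + 1)%nat with (S (2*n)) by lia. ring. Qed.

Lemma fsum_delta N b (X : nat -> R) :
  fsum N (fun a => (if Nat.eqb a b then 1 else 0) * X a) = (if Nat.ltb b N then 1 else 0) * X b.
Proof. induction N; simpl. destruct b; simpl; ring.
  rewrite IHN. destruct (Nat.eqb N b) eqn:E.
  - apply Nat.eqb_eq in E; subst. rewrite (proj2 (Nat.ltb_ge b b)) by lia.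
    rewrite (proj2 (Nat.ltb_lt b (S b))) by lia. ring.
  - apply Nat.eqb_neq in E. destruct (Nat.ltb b N) eqn:E1.
    + apply Nat.ltb_lt in E1. rewrite (proj2 (Nat.ltb_lt b (S N))) by lia. ring.
    + apply Nat.ltb_ge in E1. rewrite (proj2 (Nat.ltb_ge b (S N))) by lia. ring. Qed.

Lemma fsum_restrict N n (X : nat -> R) : (N <= n)%nat ->
  fsum n (fun a => (if Nat.ltb a N then 1 else 0) * X a) = fsum N X.
Proof. intros H. induction n. replace N with O by lia. reflexivity.
  destruct (Nat.eq_dec N (S n)).
  - subst. simpl. rewrite (proj2 (Nat.ltb_lt n (S n))) by lia.
    f_equal. 2: ring. apply fsum_ext. intros a Ha. rewrite (proj2 (Nat.ltb_lt a (S n))) by lia. ring.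
  - simpl. rewrite IHn by lia. rewrite (proj2 (Nat.ltb_ge n N)) by lia. ring. Qed.

Lemma fsum_indic n K c : (K <= n)%nat -> fsum n (fun a => if Nat.ltb a K then c else 0) = INR K * c.
Proof. intros H. rewrite (fsum_ext n _ (fun a => (if Nat.ltb a K then 1 else 0) * c)).
  rewrite fsum_restrict by auto. clear. induction K. simpl; ring. rewrite S_INR. simpl. rewrite IHK. ring.
  intros; destruct Nat.ltb; ring. Qed.

Lemma msum_ext m N F G : (forall i, (forall k, (k<m)%nat -> (i k < N)%nat) -> (forall k, (m<=k)%nat -> i k = O) -> F i = G i) -> msum m N F = msum m N G.
Proof. revert F G; induction m; intros F G H; simpl.
  - apply H; intros; [lia|reflexivity].
  - apply fsum_ext; intros a Ha. apply IHm. intros i Hi Hz. apply H.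
    + intros [|k] Hk; simpl; auto. apply Hi; lia.
    + intros [|k] Hk; simpl; [lia|]. apply Hz; lia. Qed.

Lemma msum_lin m N c d F G : msum m N (fun i => c * F i + d * G i) = c * msum m N F + d * msum m N G.
Proof. revert F G; induction m; intros F G; simpl; [reflexivity|].
  rewrite <- fsum_lin. apply fsum_ext; intros. apply IHm. Qed.

Lemma msum_scal m N c F : msum m N (fun i => c * F i) = c * msum m N F.
Proof. revert F; induction m; intros F; simpl; [reflexivity|].
  rewrite <- fsum_scal. apply fsum_ext; intros. apply IHm. Qed.

Lemma msum_le m N F G : (forall i, F i <= G i) -> msum m N F <= msum m N G.
Proof. revert F G; induction m; intros F G H; simpl; auto. apply fsum_le; intros. apply IHm; auto. Qed.

Lemma msum_abs m N F : Rabs (msum m N F) <= msum m N (fun i => Rabs (F i)).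
Proof. revert F; induction m; intros F; simpl. lra.
  eapply Rle_trans. apply fsum_abs. apply fsum_le; intros. apply IHm. Qed.

Lemma msum_nonneg m N F : (forall i, 0 <= F i) -> 0 <= msum m N F.
Proof. revert F; induction m; intros F H; simpl; auto. apply fsum_nonneg; intros. apply IHm; auto. Qed.

Lemma fprod_ext n f g : (forall k, (k<n)%nat -> f k = g k) -> fprod n f = fprod n g.
Proof. induction n; simpl; intros H; [reflexivity|]. rewrite IHn, H; auto. Qed.

Lemma fprod_S n f : fprod (S n) f = f O * fprod n (fun k => f (S k)).
Proof. induction n. simpl; ring. change (fprod (S (S n)) f) with (fprod (S n) f * f (S n)).
  rewrite IHn. simpl. ring. Qed.

Lemma fprod_mult n f g : fprod n (fun k => f k * g k) = fprod n f * fprod n g.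
Proof. induction n; simpl; [ring|]. rewrite IHn; ring. Qed.

Lemma fprod_abs n f : Rabs (fprod n f) = fprod n (fun k => Rabs (f k)).
Proof. induction n; simpl. apply Rabs_R1. rewrite Rabs_mult, IHn; ring. Qed.

Lemma fprod_one n : fprod n (fun _ => 1) = 1.
Proof. induction n; simpl; [ring|]. rewrite IHn; ring. Qed.

Lemma fprod_sign n f : (forall k, (k<n)%nat -> f k = 1 \/ f k = -1) -> Rabs (fprod n f) = 1.
Proof. intros H. rewrite fprod_abs. rewrite <- (fprod_one n). apply fprod_ext.
  intros k Hk. destruct (H k Hk) as [E|E]; rewrite E; [apply Rabs_R1|]. rewrite Rabs_left; lra. Qed.

Lemma fprod_lin m k0 (f g h : nat -> R) a b : (k0 < m)%nat ->
  (forall k, (k<m)%nat -> k<>k0 -> f k = g k /\ f k = h k) -> f k0 = a * g k0 + b * h k0 ->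
  fprod m f = a * fprod m g + b * fprod m h.
Proof. induction m; intros Hk H H0; [lia|]. simpl.
  destruct (Nat.eq_dec k0 m).
  - subst. rewrite H0. rewrite (fprod_ext m f g), (fprod_ext m h g). ring.
    intros k Hk'. destruct (H k ltac:(lia) ltac:(lia)); congruence.
    intros k Hk'. destruct (H k ltac:(lia) ltac:(lia)); congruence.
  - rewrite IHm; auto; try lia. destruct (H m ltac:(lia) ltac:(lia)) as [E1 E2].
    rewrite E1. replace (h m) with (g m) by congruence. ring. Qed.

Lemma pw_nonneg x r : 0 <= pw x r.
Proof. unfold pw; destruct Rle_dec; [lra|]. left; apply exp_pos. Qed.
Lemma pw_0 r : pw 0 r = 0.
Proof. unfold pw; destruct Rle_dec; lra. Qed.
Lemma pw_pos x r : 0 < x -> pw x r = Rpower x r.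
Proof. unfold pw; destruct Rle_dec; lra. Qed.
Lemma Rpower_pos x r : 0 < Rpower x r.
Proof. apply exp_pos. Qed.
Lemma pw_mult x y r : 0 <= x -> 0 <= y -> pw (x*y) r = pw x r * pw y r.
Proof. intros Hx Hy. destruct (Req_dec x 0). subst. rewrite Rmult_0_l, pw_0; ring.
  destruct (Req_dec y 0). subst. rewrite Rmult_0_r, pw_0; ring.
  rewrite !pw_pos by nra. rewrite Rpower_mult_distr; auto; lra. Qed.
Lemma pw_pw x a b : 0 <= x -> pw (pw x a) b = pw x (a*b).
Proof. intros Hx. destruct (Req_dec x 0). subst. rewrite !pw_0; auto.
  rewrite (pw_pos x a) by lra. rewrite !pw_pos by (apply Rpower_pos || lra). apply Rpower_mult. Qed.
Lemma pw_1 x : 0 <= x -> pw x 1 = x.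
Proof. intros Hx. destruct (Req_dec x 0). subst; apply pw_0. rewrite pw_pos by lra. apply Rpower_1; lra. Qed.
Lemma pw_2 x : 0 <= x -> pw x 2 = x ^ 2.
Proof. intros Hx. destruct (Req_dec x 0). subst. rewrite pw_0; ring.
  rewrite pw_pos by lra. replace 2 with (INR 2) by (simpl; ring). apply Rpower_pow; lra. Qed.
Lemma pw_half x : 0 <= x -> pw x (1/2) = sqrt x.
Proof. intros Hx. destruct (Req_dec x 0). subst. rewrite pw_0, sqrt_0; auto.
  rewrite pw_pos by lra. replace (1/2) with (/2) by field. apply Rpower_sqrt; lra. Qed.
Lemma pw_mono x y r : 0 <= x <= y -> 0 <= r -> pw x r <= pw y r.
Proof. intros Hx Hr. destruct (Req_dec x 0). subst. rewrite pw_0; apply pw_nonneg.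
  rewrite !pw_pos by lra. apply Rle_Rpower_l; lra. Qed.
Lemma pw_zero_inv x r : 0 <= x -> pw x r = 0 -> x = 0.
Proof. intros Hx H. destruct (Req_dec x 0); auto. rewrite pw_pos in H by lra.
  pose proof (Rpower_pos x r). lra. Qed.
Lemma pw_le1 x r : 0 <= x -> 0 < r -> pw x r <= 1 -> x <= 1.
Proof. intros Hx Hr H. destruct (Rle_dec x 1); auto. exfalso.
  rewrite pw_pos in H by lra. assert (Rpower 1 r < Rpower x r).
  { unfold Rpower. apply exp_increasing. rewrite ln_1. apply Rmult_lt_compat_l; auto. rewrite <- ln_1; apply ln_increasing; lra. }
  unfold Rpower in H0 at 1. rewrite ln_1, Rmult_0_r, exp_0 in H0. lra. Qed.


Lemma rad_SS_lo j t : rad (S (S j)) t = rad (S j) (2*t).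
Proof. unfold rad. f_equal. f_equal. simpl. ring. Qed.

Lemma rad_SS_hi j t : rad (S (S j)) t = rad (S j) (2*t-1).
Proof. unfold rad. f_equal.
  replace (2 ^ S (S j) * PI * t) with (2 ^ S j * PI * (2 * t - 1) + 2 * INR (2^j) * PI).
  apply sin_period. rewrite pow_INR. replace (INR 2) with 2 by (simpl; ring).
  change (2 ^ S (S j)) with (2 * (2 * 2 ^ j)). change (2 ^ S j) with (2 * 2 ^ j). ring. Qed.

Lemma rad1_lo t : 0 < t < 1/2 -> rad 1 t = 1.
Proof. intros H. unfold rad, Rsign. destruct Rlt_dec as [_|n]; auto. exfalso; apply n.
  apply sin_gt_0; simpl; pose proof PI_RGT_0; nra. Qed.

Lemma rad1_hi t : 1/2 < t < 1 -> rad 1 t = -1.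
Proof. intros H. unfold rad, Rsign. pose proof PI_RGT_0.
  assert (sin (2 ^ 1 * PI * t) < 0).
  { replace (2 ^ 1 * PI * t) with ((2*PI*t - PI) + PI) by (simpl; ring). rewrite neg_sin.
    assert (0 < sin (2*PI*t - PI)) by (apply sin_gt_0; nra). lra. }
  destruct Rlt_dec; [lra|]. destruct Rlt_dec; lra. Qed.

Lemma scal_R (x y : R) : scal x y = x * y. Proof. reflexivity. Qed.
Lemma plus_R (x y : R) : plus x y = x + y. Proof. reflexivity. Qed.

Lemma is_RInt_eq (f : R -> R) a b (l l' : R) : is_RInt f a b l -> l = l' -> is_RInt f a b l'.
Proof. intros H E; subst; auto. Qed.

Definition depK (K : nat) (F : (nat -> R) -> R) :=
  forall s s', (forall j, (j < K)%nat -> s j = s' j) -> F s = F s'.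

Fixpoint Avg (K : nat) (F : (nat -> R) -> R) : R :=
  match K with
  | O => F (fun _ => 0)
  | S K' => (Avg K' (fun s => F (scons 1 s)) + Avg K' (fun s => F (scons (-1) s))) / 2
  end.

Lemma depK_S K F a : depK (S K) F -> depK K (fun s => F (scons a s)).
Proof. intros H s s' E. apply H. intros [|j] Hj; simpl; auto. apply E; lia. Qed.

Lemma Avg_int K : forall F, depK K F ->
  is_RInt (fun t => F (fun j => rad (S j) t)) 0 1 (Avg K F).
Proof. induction K; intros F HF.
  - simpl. apply is_RInt_ext with (f := fun _ => F (fun _ => 0)).
    + intros x _. apply HF. intros; lia.
    + pose proof (is_RInt_const 0 1 (F (fun _ => 0))) as H. rewrite scal_R in H.
      replace ((1-0) * F (fun _ => 0)) with (F (fun _ => 0)) in H by ring. exact H.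
  - simpl. eapply is_RInt_eq.
    apply is_RInt_Chasles with (b := 1/2).
    + pose proof (IHK _ (depK_S K F 1 HF)) as H.
      assert (H1 : is_RInt (fun u => F (scons 1 (fun j => rad (S j) u))) (2*0+0) (2*(1/2)+0)
                   (Avg K (fun s => F (scons 1 s)))).
      { replace (2*0+0) with 0 by ring. replace (2*(1/2)+0) with 1 by field. exact H. }
      apply is_RInt_comp_lin in H1. apply (is_RInt_scal _ _ _ (1/2)) in H1.
      eapply is_RInt_ext; [|exact H1]. intros x Hx. rewrite Rmin_left in Hx by lra.
      rewrite Rmax_right in Hx by lra. cbv [scal]; simpl; cbv [mult]; simpl.
      replace (1/2 * (2 * F (scons 1 (fun j => rad (S j) (2 * x + 0))))) with
        (F (scons 1 (fun j => rad (S j) (2 * x + 0)))) by field.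
      apply HF. intros [|j] _; simpl. symmetry; apply rad1_lo; lra. rewrite rad_SS_lo. f_equal; ring.
    + pose proof (IHK _ (depK_S K F (-1) HF)) as H.
      assert (H1 : is_RInt (fun u => F (scons (-1) (fun j => rad (S j) u))) (2*(1/2)+(-1)) (2*1+(-1))
                   (Avg K (fun s => F (scons (-1) s)))).
      { replace (2*(1/2)+(-1)) with 0 by field. replace (2*1+(-1)) with 1 by ring. exact H. }
      apply is_RInt_comp_lin in H1. apply (is_RInt_scal _ _ _ (1/2)) in H1.
      eapply is_RInt_ext; [|exact H1]. intros x Hx. rewrite Rmin_left in Hx by lra.
      rewrite Rmax_right in Hx by lra. cbv [scal]; simpl; cbv [mult]; simpl.
      replace (1/2 * (2 * F (scons (-1) (fun j => rad (S j) (2 * x + -1))))) with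
        (F (scons (-1) (fun j => rad (S j) (2 * x + -1)))) by field.
      apply HF. intros [|j] _; simpl. symmetry; apply rad1_hi; lra. rewrite rad_SS_hi. f_equal; ring.
    + match goal with |- plus (scal _ ?a) (scal _ ?b) = _ => change (plus (scal (1/2) a) (scal (1/2) b)) with (1/2*a + 1/2*b) end; field.
Qed.

Lemma RInt01_of f l : is_RInt f 0 1 l -> RInt01 f l.
Proof. intros H. exists (ex_RInt_Reals_0 f 0 1 (ex_intro _ l H)).
  rewrite <- RInt_Reals. apply is_RInt_unique; auto. Qed.

Fixpoint MAvg (m K : nat) (G : (nat -> nat -> R) -> R) : R :=
  match m with
  | O => G (fun _ _ => 0)
  | S m' => Avg K (fun s => MAvg m' K (fun x => G (scons s x)))
  end.

Definition depMK (m K : nat) (G : (nat -> nat -> R) -> R) :=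
  forall x x', (forall k j, (k < m)%nat -> (j < K)%nat -> x k j = x' k j) -> G x = G x'.

Lemma depMK_S m K G s : depMK (S m) K G -> depMK m K (fun x => G (scons s x)).
Proof. intros H x x' E. apply H. intros [|k] j Hk Hj; simpl; auto. apply E; lia. Qed.

Lemma depMK_dep m K G : depMK (S m) K G -> depK K (fun s => MAvg m K (fun x => G (scons s x))).
Proof. intros H s s' E. f_equal. apply functional_extensionality; intros x. apply H.
  intros [|k] j Hk Hj; simpl; auto. Qed.

Lemma Iter_main K m : forall G, depMK m K G ->
  IterInt m (fun t => G (fun k j => rad (S j) (t k))) (MAvg m K G).
Proof. induction m; intros G HG.
  - simpl. apply HG. intros; lia.
  - simpl. exists (fun t => MAvg m K (fun x => G (scons (fun j => rad (S j) t) x))). split.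
    + apply RInt01_of. apply (Avg_int K (fun s => MAvg m K (fun x => G (scons s x)))).
      apply depMK_dep; auto.
    + intros t _. pose proof (IHm _ (depMK_S m K G (fun j => rad (S j) t) HG)) as H.
      replace (fun s => G (fun k j => rad (S j) (scons t s k))) with
        (fun s => G (scons (fun j => rad (S j) t) (fun k j => rad (S j) (s k)))); auto.
      apply functional_extensionality; intros s. f_equal. apply functional_extensionality; intros [|k]; reflexivity.
Qed.


Definition sig (c : nat) : nat -> R := fun j => if Nat.testbit c j then -1 else 1.

Lemma sig_even d : sig (2*d) = scons 1 (sig d).
Proof. apply functional_extensionality; intros [|j]; unfold sig; simpl scons.
  rewrite Nat.testbit_even_0; auto. rewrite Nat.testbit_even_succ by lia; auto. Qed.
Lemma sig_odd d : sig (2*d+1) = scons (-1) (sig d).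
Proof. apply functional_extensionality; intros [|j]; unfold sig; simpl scons.
  rewrite Nat.testbit_odd_0; auto. rewrite Nat.testbit_odd_succ by lia; auto. Qed.

Lemma sig_sign c j : sig c j = 1 \/ sig c j = -1.
Proof. unfold sig; destruct Nat.testbit; auto. Qed.

Lemma Avg_flat K : forall F, depK K F -> Avg K F = fsum (2^K)%nat (fun c => F (sig c)) / 2^K.
Proof. induction K; intros F HF.
  - simpl. rewrite (HF _ (sig 0)) by (intros; lia). field.
  - simpl Avg. rewrite IHK, IHK by (apply depK_S; auto).
    change (2 ^ S K)%nat with (2 * 2^K)%nat. rewrite fsum_double.
    rewrite (fsum_ext (2^K) (fun d => F (sig (2*d)%nat) + F (sig (2*d+1)%nat)) (fun d => F (scons 1 (sig d)) + F (scons (-1) (sig d)))).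
    rewrite fsum_plus. change (2 ^ S K) with (2 * 2 ^ K). field. apply pow_nonzero; lra.
    intros; rewrite sig_even, sig_odd; auto. Qed.

Definition app (N : nat) (s s' : nat -> R) : nat -> R := fun j => if Nat.ltb j N then s j else s' (j - N)%nat.

Lemma Avg_app N L : forall F, Avg (N + L) F = Avg N (fun s => Avg L (fun s' => F (app N s s'))).
Proof. induction N; intros F.
  - simpl. f_equal. apply functional_extensionality; intros s'. f_equal.
    apply functional_extensionality; intros j. unfold app. simpl. f_equal; lia.
  - simpl. rewrite !IHN. f_equal. f_equal.
    + f_equal. apply functional_extensionality; intros s. f_equal. apply functional_extensionality; intros s'.
      f_equal. apply functional_extensionality; intros [|j]; unfold app; simpl; auto.
    + f_equal. apply functional_extensionality; intros s. f_equal. apply functional_extensionality; intros s'.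
      f_equal. apply functional_extensionality; intros [|j]; unfold app; simpl; auto. Qed.

Lemma MAvg_flat K m : forall G, depMK m K G ->
  MAvg m K G = Avg (m*K) (fun s => G (fun k j => s (k*K + j)%nat)).
Proof. induction m; intros G HG.
  - reflexivity.
  - simpl MAvg. change (S m * K)%nat with (K + m * K)%nat. rewrite Avg_app.
    f_equal. apply functional_extensionality; intros s. rewrite IHm by (apply depMK_S; auto).
    f_equal. apply functional_extensionality; intros s'. apply HG.
    intros [|k] j Hk Hj; unfold app; simpl.
    + rewrite (proj2 (Nat.ltb_lt j K)) by lia. reflexivity.
    + rewrite (proj2 (Nat.ltb_ge (K + k * K + j) K)) by lia. f_equal; lia. Qed.

Lemma Avg_flip K : forall F (eps : nat -> R), (forall j, (j < K)%nat -> eps j = 1 \/ eps j = -1) ->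
  Avg K (fun s => F (fun j => eps j * s j)) = Avg K F.
Proof. induction K; intros F eps He.
  - simpl. f_equal. apply functional_extensionality; intros; ring.
  - simpl.
    assert (E : forall a, (fun s : nat -> R => F (fun j => eps j * scons a s j)) =
                     (fun s => (fun s0 => F (scons (eps O * a) s0)) (fun j => eps (S j) * s j))).
    { intros a. apply functional_extensionality; intros s. f_equal.
      apply functional_extensionality; intros [|j]; reflexivity. }
    assert (E2 : forall a, Avg K (fun s : nat -> R => F (fun j => eps j * scons a s j)) = Avg K (fun s => F (scons (eps O * a) s))).
    { intros a. rewrite E. apply (IHK (fun s0 => F (scons (eps O * a) s0)) (fun j => eps (S j))).
      intros; apply He; lia. }
    rewrite !E2.
    destruct (He O ltac:(lia)) as [H|H]; rewrite H.
    + replace (1*1) with 1 by ring. replace (1 * -1) with (-1) by ring. reflexivity.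
    + replace (-1*1) with (-1) by ring. replace (-1 * -1) with 1 by ring. lra. Qed.

Lemma Avg_scal K : forall F c, Avg K (fun s => F s * c) = Avg K F * c.
Proof. induction K; intros F c; simpl; auto. rewrite !IHK. field. Qed.

Lemma MAvg_scal K m : forall G c, MAvg m K (fun x => G x * c) = MAvg m K G * c.
Proof. induction m; intros G c; simpl; auto.
  rewrite <- Avg_scal. f_equal. apply functional_extensionality; intros s. apply IHm. Qed.

Lemma MAvg_prod K m : forall h : (nat -> R) -> R,
  MAvg m K (fun x => fprod m (fun k => h (x k))) = (Avg K h) ^ m.
Proof. induction m; intros h.
  - simpl. reflexivity.
  - simpl MAvg. rewrite (functional_extensionality _ (fun s => h s * MAvg m K (fun x => fprod m (fun k => h (x k))))).
    rewrite Avg_scal. rewrite IHm. simpl. ring.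
    intros s. rewrite Rmult_comm, <- MAvg_scal. f_equal. apply functional_extensionality; intros x.
    change (fprod m (fun k => h (scons s x k)) * h (scons s x m)) with (fprod (S m) (fun k => h (scons s x k))).
    rewrite fprod_S. simpl. ring. Qed.


Definition chi (N a : nat) : R := if Nat.ltb a N then 1 else 0.
Definition dlt (a b : nat) : R := if Nat.eqb a b then 1 else 0.

Lemma msum_delta m : forall N (j : nat -> nat) F, (forall k, (m <= k)%nat -> j k = O) ->
  msum m N (fun i => fprod m (fun k => dlt (i k) (j k)) * F i) = fprod m (fun k => chi N (j k)) * F j.
Proof. induction m; intros N j F Hj.
  - simpl. f_equal. f_equal. apply functional_extensionality; intros k. rewrite Hj; auto; lia.
  - cbn [msum].
    rewrite (fsum_ext N _ (fun a => dlt a (j O) * msum m N (fun i => fprod m (fun k => dlt (i k) (j (S k))) * F (scons a i)))).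
    + rewrite (fsum_ext N _ (fun a => dlt a (j O) * (fprod m (fun k => chi N (j (S k))) * F (scons a (fun k => j (S k)))))).
      * unfold dlt at 1. rewrite fsum_delta. rewrite fprod_S. fold (chi N (j O)).
        replace (scons (j O) (fun k => j (S k))) with j. ring.
        apply functional_extensionality; intros [|k]; reflexivity.
      * intros a _. f_equal. apply (IHm N (fun k => j (S k)) (fun i => F (scons a i))). intros; apply Hj; lia.
    + intros a _. rewrite <- msum_scal. apply msum_ext. intros i _ _. rewrite fprod_S. simpl. ring.
Qed.

Lemma msum_prod m : forall N (g : nat -> nat -> R),
  msum m N (fun i => fprod m (fun k => g k (i k))) = fprod m (fun k => fsum N (g k)).
Proof. induction m; intros N g.
  - reflexivity.
  - cbn [msum]. rewrite fprod_S.
    rewrite (fsum_ext N _ (fun a => fprod m (fun k => fsum N (g (S k))) * g O a)).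
    + rewrite fsum_scal. ring.
    + intros a _. rewrite <- (IHm N (fun k => g (S k))). rewrite Rmult_comm, <- msum_scal.
      apply msum_ext. intros i _ _. rewrite fprod_S. simpl. ring. Qed.

Lemma msum_restrict m : forall n N F, (N <= n)%nat ->
  msum m n (fun i => fprod m (fun k => chi N (i k)) * F i) = msum m N F.
Proof. induction m; intros n N F H.
  - simpl. ring.
  - cbn [msum].
    rewrite (fsum_ext n _ (fun a => (if Nat.ltb a N then 1 else 0) * msum m N (fun i => F (scons a i)))).
    + apply fsum_restrict; auto.
    + intros a _. rewrite <- (IHm n N (fun i => F (scons a i))) by auto. rewrite <- msum_scal.
      apply msum_ext. intros i _ _. rewrite fprod_S. simpl. unfold chi at 1. ring. Qed.

Lemma fsum_zero_each n f : (forall a, (a<n)%nat -> 0 <= f a) -> fsum n f = 0 -> forall a, (a<n)%nat -> f a = 0.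
Proof. induction n; intros H E a Ha; [lia|]. simpl in E.
  assert (0 <= fsum n f) by (apply fsum_nonneg; auto).
  assert (0 <= f n) by auto.
  destruct (Nat.eq_dec a n). subst; lra. apply IHn; auto; try lia; lra. Qed.

Lemma exp_convex a b l : 0 <= l <= 1 -> exp (l*a + (1-l)*b) <= l * exp a + (1-l) * exp b.
Proof. intros Hl. set (c := l*a + (1-l)*b).
  assert (Ea : exp a = exp c * exp (a - c)) by (rewrite <- exp_plus; f_equal; ring).
  assert (Eb : exp b = exp c * exp (b - c)) by (rewrite <- exp_plus; f_equal; ring).
  pose proof (exp_ineq1_le (a-c)). pose proof (exp_ineq1_le (b-c)). pose proof (exp_pos c).
  rewrite Ea, Eb.
  assert (A1 : exp c * (1 + (a-c)) <= exp c * exp (a-c)) by (apply Rmult_le_compat_l; lra).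
  assert (A2 : exp c * (1 + (b-c)) <= exp c * exp (b-c)) by (apply Rmult_le_compat_l; lra).
  assert (B1 : l * (exp c * (1 + (a-c))) <= l * (exp c * exp (a-c))) by (apply Rmult_le_compat_l; lra).
  assert (B2 : (1-l) * (exp c * (1 + (b-c))) <= (1-l) * (exp c * exp (b-c))) by (apply Rmult_le_compat_l; lra).
  assert (E : l * (exp c * (1 + (a-c))) + (1-l) * (exp c * (1 + (b-c))) = exp c) by (unfold c; ring).
  lra. Qed.

Lemma div_nonneg a b : 0 <= a -> 0 < b -> 0 <= a / b.
Proof. intros; apply Rmult_le_pos; auto. left; apply Rinv_0_lt_compat; auto. Qed.

Lemma young u v p : 0 <= u -> 0 <= v -> 1 < p ->
  u * v <= pw u (p/(p-1)) / (p/(p-1)) + pw v p / p.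
Proof. intros Hu Hv Hp.
  assert (Hq : 0 < p/(p-1)) by (apply Rdiv_lt_0_compat; lra).
  destruct (Req_dec u 0). { subst. pose proof (pw_nonneg 0 (p/(p-1))). pose proof (pw_nonneg v p).
    assert (0 <= pw 0 (p / (p - 1)) / (p / (p - 1))) by (apply div_nonneg; lra).
    assert (0 <= pw v p / p) by (apply div_nonneg; lra). lra. }
  destruct (Req_dec v 0). { subst. pose proof (pw_nonneg u (p/(p-1))). pose proof (pw_nonneg 0 p).
    assert (0 <= pw u (p / (p - 1)) / (p / (p - 1))) by (apply div_nonneg; lra).
    assert (0 <= pw 0 p / p) by (apply div_nonneg; lra). lra. }
  assert (Hl : 0 <= (p-1)/p <= 1).
  { split. apply div_nonneg; lra. apply (Rmult_le_reg_r p); [lra|]. unfold Rdiv. rewrite Rmult_assoc, Rinv_l by lra. lra. }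
  rewrite !pw_pos by lra. unfold Rpower.
  pose proof (exp_convex (p/(p-1) * ln u) (p * ln v) ((p-1)/p) Hl) as H1.
  replace ((p - 1) / p * (p / (p - 1) * ln u) + (1 - (p - 1) / p) * (p * ln v)) with (ln u + ln v) in H1 by (field; lra).
  rewrite exp_plus, !exp_ln in H1 by lra.
  replace (exp (p / (p - 1) * ln u) / (p / (p - 1))) with ((p-1)/p * exp (p / (p - 1) * ln u)) by (field; lra).
  replace (exp (p * ln v) / p) with ((1 - (p-1)/p) * exp (p * ln v)) by (field; lra). lra. Qed.

Lemma fsum_zero n : fsum n (fun _ => 0) = 0.
Proof. induction n; simpl; auto. rewrite IHn; ring. Qed.

Lemma Rpower_one_l y : Rpower 1 y = 1.
Proof. unfold Rpower. rewrite ln_1, Rmult_0_r. apply exp_0. Qed.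

Lemma holder K (x h : nat -> R) p : 1 < p ->
  fsum K (fun c => pw (Rabs (x c)) (p/(p-1))) <= 1 ->
  Rabs (fsum K (fun c => x c * h c)) <= pw (fsum K (fun c => pw (Rabs (h c)) p)) (1/p).
Proof. intros Hp Hx. set (S := fsum K (fun c => pw (Rabs (h c)) p)).
  assert (HS : 0 <= S) by (apply fsum_nonneg; intros; apply pw_nonneg).
  eapply Rle_trans. apply fsum_abs.
  destruct (Req_dec S 0) as [E|E].
  - pose proof (fsum_zero_each K _ (fun a _ => pw_nonneg (Rabs (h a)) p) E) as Z.
    eapply Rle_trans with (fsum K (fun _ => 0)).
    + apply fsum_le. intros a Ha. pose proof (Z a Ha) as Za. apply pw_zero_inv in Za; [|apply Rabs_pos]. rewrite Rabs_mult, Za. lra.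
    + rewrite fsum_zero. apply pw_nonneg.
  - assert (HS' : 0 < S) by lra. set (b := Rpower S (1/p)).
    assert (Hb : 0 < b) by apply Rpower_pos.
    assert (Hbp : Rpower b p = S).
    { unfold b. rewrite Rpower_mult. replace (1/p*p) with 1 by (field; lra). apply Rpower_1; auto. }
    assert (Hib : pw (/ b) p = / S).
    { rewrite pw_pos by (apply Rinv_0_lt_compat; auto).
      assert (Rpower (/b) p * Rpower b p = 1).
      { rewrite Rpower_mult_distr by (try apply Rinv_0_lt_compat; auto). rewrite Rinv_l by lra. apply Rpower_one_l. }
      rewrite Hbp in H. field_simplify_eq; auto. }
    rewrite pw_pos by auto. fold b.
    set (q := p/(p-1)). assert (Hq : 0 < q) by (apply Rdiv_lt_0_compat; lra).
    apply Rle_trans with (fsum K (fun c => (b/q) * pw (Rabs (x c)) q + (b/(S*p)) * pw (Rabs (h c)) p)).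
    + apply fsum_le. intros c _. rewrite Rabs_mult.
      pose proof (young (Rabs (x c)) (Rabs (h c) * / b) p (Rabs_pos _) (Rmult_le_pos _ _ (Rabs_pos _) (Rlt_le _ _ (Rinv_0_lt_compat _ Hb))) Hp) as Y.
      rewrite pw_mult in Y by (try apply Rabs_pos; left; apply Rinv_0_lt_compat; auto).
      rewrite Hib in Y. fold q in Y.
      apply (Rmult_le_compat_l b) in Y; [|lra].
      replace (b * (Rabs (x c) * (Rabs (h c) * / b))) with (Rabs (x c) * Rabs (h c)) in Y by (field; lra).
      eapply Rle_trans; [exact Y|]. right. field. repeat split; lra.
    + rewrite fsum_lin. fold S.
      assert (b / q * fsum K (fun c => pw (Rabs (x c)) q) <= b / q * 1).
      { apply Rmult_le_compat_l; auto. apply div_nonneg; lra. }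
      replace (b / (S * p) * S) with (b / p) by (field; lra).
      assert (b / q * 1 + b / p = b) by (unfold q; field; lra). lra. Qed.

Lemma holder1 K (x h : nat -> R) : (forall c, (c < K)%nat -> Rabs (x c) <= 1) ->
  Rabs (fsum K (fun c => x c * h c)) <= pw (fsum K (fun c => pw (Rabs (h c)) 1)) (1/1).
Proof. intros Hx. rewrite (fsum_ext K (fun c => pw (Rabs (h c)) 1) (fun c => Rabs (h c))) by (intros; apply pw_1, Rabs_pos).
  replace (1/1) with 1 by field. rewrite pw_1 by (apply fsum_nonneg; intros; apply Rabs_pos).
  eapply Rle_trans. apply fsum_abs. apply fsum_le. intros c Hc. rewrite Rabs_mult.
  pose proof (Hx c Hc). pose proof (Rabs_pos (h c)). pose proof (Rabs_pos (x c)). nra. Qed.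


Lemma divmod_eq N k j : (j < N)%nat -> ((k*N+j)/N = k /\ (k*N+j) mod N = j)%nat.
Proof. intros H. split.
  - symmetry. apply Nat.div_unique with j; auto. lia.
  - symmetry. apply Nat.mod_unique with k; auto. lia. Qed.

Definition wgt (p : R) (m N : nat) : R := Rpower (/ 2^(m*N)) (1/p).
Definition gz (m N : nat) (y : (nat -> nat) -> R) (s : nat -> R) (z : nat -> nat -> R) : R :=
  msum m N (fun i => fprod m (fun k => s (k*N + i k)%nat * z k (i k)) * y i).
Definition Tf p m N y (x : nat -> nat -> R) : R :=
  fsum (2^(m*N)) (fun c => x O c * (wgt p m N * gz m N y (sig c) (fun k => x (S k)))).
Definition Gm p m N y (s : nat -> R) : R := pw (Rabs (gz m N y s (fun _ _ => 1))) p.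
Definition Bv p m N y : R := pw (Avg (m*N) (Gm p m N y)) (1/p).

Lemma Tf_ext p m N y x x' : (forall j, (j < S m)%nat -> x j = x' j) -> Tf p m N y x = Tf p m N y x'.
Proof. intros H. unfold Tf. apply fsum_ext; intros c _. rewrite (H O) by lia. f_equal. f_equal.
  unfold gz. apply msum_ext; intros i _ _. f_equal. apply fprod_ext; intros k Hk. rewrite (H (S k)) by lia. auto. Qed.

Lemma Tf_lin p m N y (j : nat) (x : nat -> nat -> R) (u v : nat -> R) (a b : R) : (j < S m)%nat ->
  Tf p m N y (upd x j (fun i => a * u i + b * v i)) = a * Tf p m N y (upd x j u) + b * Tf p m N y (upd x j v).
Proof. intros Hj. unfold Tf. rewrite <- fsum_lin. apply fsum_ext; intros c _.
  destruct j as [|j0].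
  - unfold upd; simpl. ring.
  - unfold upd; simpl. unfold gz.
    rewrite (msum_ext m N _ (fun i => a * (fprod m (fun k => sig c (k * N + i k)%nat * (if Nat.eqb k j0 then u else x (S k)) (i k)) * y i)
                             + b * (fprod m (fun k => sig c (k * N + i k)%nat * (if Nat.eqb k j0 then v else x (S k)) (i k)) * y i))).
    + rewrite msum_lin. ring.
    + intros i _ _. rewrite (fprod_lin m j0 _ (fun k => sig c (k * N + i k)%nat * (if Nat.eqb k j0 then u else x (S k)) (i k))
         (fun k => sig c (k * N + i k)%nat * (if Nat.eqb k j0 then v else x (S k)) (i k)) a b); try lia.
      * ring.
      * intros k _ Hk. rewrite (proj2 (Nat.eqb_neq k j0) Hk). auto.
      * rewrite Nat.eqb_refl. ring. Qed.

Lemma Tf_multilinear p m N y q : multilinear (S m) q (Tf p m N y).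
Proof. split.
  - intros; apply Tf_ext; auto.
  - intros. apply Tf_lin; auto. Qed.

Lemma fsum_sumf n f : fsum (S n) f = sum_f_R0 f n.
Proof. induction n; simpl; [ring|]. simpl in IHn. rewrite <- IHn. ring. Qed.

Lemma ball_fin_partial q v l : infinite_sum (fun k => pw (Rabs (v k)) q) l -> forall K, fsum K (fun k => pw (Rabs (v k)) q) <= l.
Proof. intros H K. apply Rle_trans with (fsum (S K) (fun k => pw (Rabs (v k)) q)).
  - simpl. pose proof (pw_nonneg (Rabs (v K)) q). lra.
  - rewrite fsum_sumf. apply growing_ineq; auto.
    intros n. simpl. pose proof (pw_nonneg (Rabs (v (S n))) q). lra. Qed.

Lemma ball_fin q v : 0 < q -> inBall (Fin q) v -> (forall K, fsum K (fun k => pw (Rabs (v k)) q) <= 1) /\ (forall c, Rabs (v c) <= 1).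
Proof. intros Hq [l [Hl Hl1]]. pose proof (ball_fin_partial q v l Hl) as P. split.
  - intros K; specialize (P K); lra.
  - intros c. apply (pw_le1 _ q); auto. apply Rabs_pos.
    specialize (P (S c)). simpl in P. pose proof (fsum_nonneg c (fun k => pw (Rabs (v k)) q) (fun _ _ => pw_nonneg _ _)). lra. Qed.

Lemma ball_inX q v : inBall q v -> inX q v.
Proof. destruct q; simpl. intros [l [H _]]; eauto. intros [H _]; auto. Qed.

Lemma ball_inf_mod v j0 t : inBall Inf v -> Rabs t <= 1 -> inBall Inf (fun i => if Nat.eqb i j0 then t else v i).
Proof. intros [H1 H2] Ht. split.
  - intros eps Heps. destruct (H1 eps Heps) as [N0 HN]. exists (Nat.max N0 (S j0)). intros n Hn.
    rewrite (proj2 (Nat.eqb_neq n j0)) by lia. apply HN. lia.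
  - intros k. destruct Nat.eqb; auto. Qed.

Lemma conj_exp_cases p : 1 <= p -> (p = 1 /\ conj_exp p = Inf) \/ (1 < p /\ conj_exp p = Fin (p/(p-1))).
Proof. intros Hp. unfold conj_exp. destruct (Req_dec_T p 1); [left|right]; split; auto; lra. Qed.

Lemma dual_conj p : 1 <= p -> dual_exp (conj_exp p) = p.
Proof. intros Hp. destruct (conj_exp_cases p Hp) as [[E1 E2]|[E1 E2]]; rewrite E2; simpl. lra. field. split; lra. Qed.


Lemma pw_wgt p m N : 0 < p -> pw (wgt p m N) p = / 2^(m*N).
Proof. intros Hp. unfold wgt. rewrite pw_pos by apply Rpower_pos. rewrite Rpower_mult.
  replace (1/p*p) with 1 by (field; lra). apply Rpower_1. apply Rinv_0_lt_compat, pow_lt; lra. Qed.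

Lemma wgt_pos p m N : 0 < wgt p m N.
Proof. apply Rpower_pos. Qed.

Lemma Gm_dep_eps p m N y (eps : nat -> R) : depK (m*N) (fun s => Gm p m N y (fun j => eps j * s j)).
Proof. intros s s' E. unfold Gm, gz. f_equal. f_equal. apply msum_ext; intros i Hi _. f_equal.
  apply fprod_ext; intros k Hk. rewrite E; auto. specialize (Hi k Hk). nia. Qed.

Lemma gz_eps m N y c (z : nat -> nat -> R) :
  gz m N y (sig c) z = gz m N y (fun j => z (j / N)%nat (j mod N)%nat * sig c j) (fun _ _ => 1).
Proof. unfold gz. apply msum_ext; intros i Hi _. f_equal. apply fprod_ext; intros k Hk.
  destruct (divmod_eq N k (i k) (Hi k Hk)) as [E1 E2]. rewrite E1, E2. ring. Qed.

Lemma Tf_base p m N y x : 1 <= p ->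
  ((p = 1 /\ forall c, Rabs (x O c) <= 1) \/ (1 < p /\ forall K, fsum K (fun c => pw (Rabs (x O c)) (p/(p-1))) <= 1)) ->
  (forall k j, (k < m)%nat -> (j < N)%nat -> x (S k) j = 1 \/ x (S k) j = -1) ->
  Rabs (Tf p m N y x) <= Bv p m N y.
Proof. intros Hp HX HS.
  set (h := fun c => wgt p m N * gz m N y (sig c) (fun k => x (S k))).
  assert (Step1 : Rabs (Tf p m N y x) <= pw (fsum (2^(m*N)) (fun c => pw (Rabs (h c)) p)) (1/p)).
  { unfold Tf. fold h. destruct HX as [[E H]|[E H]].
    - subst p. apply holder1. intros; auto.
    - apply holder; auto. }
  eapply Rle_trans; [exact Step1|]. right. unfold Bv. f_equal.
  set (eps := fun j => x (S (j / N)%nat) (j mod N)%nat).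
  rewrite <- (Avg_flip (m*N) (Gm p m N y) eps).
  2:{ intros j Hj. unfold eps. assert (N <> 0%nat) by (intro; subst; lia).
      apply HS. apply Nat.Div0.div_lt_upper_bound. lia. apply Nat.mod_upper_bound; auto. }
  rewrite Avg_flat by apply Gm_dep_eps.
  rewrite (fsum_ext _ _ (fun c => / 2^(m*N) * Gm p m N y (fun j => eps j * sig c j))).
  - rewrite fsum_scal. field. apply pow_nonzero; lra.
  - intros c _. unfold h. rewrite Rabs_mult, pw_mult by apply Rabs_pos.
    rewrite (Rabs_right (wgt p m N)) by (left; apply wgt_pos). rewrite pw_wgt by lra.
    unfold Gm. rewrite gz_eps. reflexivity. Qed.

Definition inballs (q : qexp) (m : nat) (x : nat -> nat -> R) := forall j, (j < S m)%nat -> inBall (slot q j) (x j).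

Lemma claim p m N y r : 1 <= p -> forall x, inballs (conj_exp p) m x ->
  (forall k j, (k < m)%nat -> (j < N)%nat -> (r <= k*N + j)%nat -> x (S k) j = 1 \/ x (S k) j = -1) ->
  Rabs (Tf p m N y x) <= Bv p m N y.
Proof. intros Hp. induction r; intros x Hx HS.
  - apply Tf_base; auto.
    + destruct (conj_exp_cases p Hp) as [[E1 E2]|[E1 E2]].
      * left. split; auto. pose proof (Hx O ltac:(lia)) as B. simpl in B. rewrite E2 in B. apply B.
      * right. split; auto. pose proof (Hx O ltac:(lia)) as B. simpl in B. rewrite E2 in B.
        apply ball_fin in B. apply B. apply Rdiv_lt_0_compat; lra.
    + intros k j Hk Hj. apply HS; auto. lia.
  - destruct (Compare_dec.le_lt_dec (m*N) r) as [Hr|Hr].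
    + apply IHr; auto. intros k j Hk Hj Hkj. exfalso. nia.
    + assert (HN : N <> 0%nat) by (intro; subst; lia).
      set (k0 := (r / N)%nat). set (j0 := (r mod N)%nat).
      assert (Hk0 : (k0 < m)%nat) by (apply Nat.Div0.div_lt_upper_bound; lia).
      assert (Hj0 : (j0 < N)%nat) by (apply Nat.mod_upper_bound; auto).
      assert (Hr0 : r = (k0 * N + j0)%nat) by (pose proof (Nat.div_mod_eq r N); unfold k0, j0; lia).
      set (t := x (S k0) j0).
      assert (Bk : inBall Inf (x (S k0))) by (apply (Hx (S k0)); lia).
      assert (Ht : Rabs t <= 1) by (apply Bk).
      set (u := fun i => if Nat.eqb i j0 then 1 else x (S k0) i).
      set (v := fun i => if Nat.eqb i j0 then -1 else x (S k0) i).
      assert (Hbu : forall w, inBall Inf w -> inballs (conj_exp p) m (upd x (S k0) w)).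
      { intros w Hw j Hj. unfold upd. destruct (Nat.eqb j (S k0)) eqn:E.
        apply Nat.eqb_eq in E; subst j. exact Hw. apply Hx; auto. }
      assert (Hsu : forall w, w j0 = 1 \/ w j0 = -1 -> (forall i, i <> j0 -> w i = x (S k0) i) ->
                 forall k j, (k < m)%nat -> (j < N)%nat -> (r <= k*N + j)%nat ->
                 upd x (S k0) w (S k) j = 1 \/ upd x (S k0) w (S k) j = -1).
      { intros w Hw0 Hw k j Hk Hj Hkj. unfold upd. destruct (Nat.eqb (S k) (S k0)) eqn:E.
        - apply Nat.eqb_eq in E. injection E as E. rewrite E in *.
          destruct (Nat.eq_dec j j0). rewrite e; auto. rewrite Hw by auto. apply HS; auto.
          assert (k0 * N + j <> r)%nat by lia. lia.
        - apply Nat.eqb_neq in E. apply HS; auto.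
          assert (k * N + j <> r)%nat.
          { intro E'. rewrite Hr0 in E'. destruct (divmod_eq N k j Hj) as [D1 _].
            destruct (divmod_eq N k0 j0 Hj0) as [D2 _]. rewrite E' in D1. lia. }
          lia. }
      assert (Eq : x = upd x (S k0) (fun i => (1+t)/2 * u i + (1-t)/2 * v i)).
      { apply functional_extensionality; intros k. unfold upd.
        destruct (Nat.eqb k (S k0)) eqn:E; auto. apply Nat.eqb_eq in E; subst k.
        apply functional_extensionality; intros i. unfold u, v. destruct (Nat.eqb i j0) eqn:E.
        apply Nat.eqb_eq in E; subst i. unfold t. field. field. }
      rewrite Eq. rewrite Tf_lin by lia.
      assert (Tu : Rabs (Tf p m N y (upd x (S k0) u)) <= Bv p m N y).
      { apply IHr. apply Hbu. apply ball_inf_mod; auto. rewrite Rabs_R1; lra.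
        apply Hsu. unfold u; rewrite Nat.eqb_refl; auto.
        intros i Hi. unfold u. rewrite (proj2 (Nat.eqb_neq i j0)); auto. }
      assert (Tv : Rabs (Tf p m N y (upd x (S k0) v)) <= Bv p m N y).
      { apply IHr. apply Hbu. apply ball_inf_mod; auto. rewrite Rabs_left; lra.
        apply Hsu. unfold v; rewrite Nat.eqb_refl; auto.
        intros i Hi. unfold v. rewrite (proj2 (Nat.eqb_neq i j0)); auto. }
      assert (Ht2 : -1 <= t <= 1) by (unfold Rabs in Ht; destruct Rcase_abs in Ht; lra). clear Ht; rename Ht2 into Ht.
      eapply Rle_trans. apply Rabs_triang. rewrite !Rabs_mult.
      rewrite (Rabs_right ((1+t)/2)) by lra. rewrite (Rabs_right ((1-t)/2)) by lra.
      assert ((1+t)/2 * Rabs (Tf p m N y (upd x (S k0) u)) <= (1+t)/2 * Bv p m N y) by (apply Rmult_le_compat_l; lra).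
      assert ((1-t)/2 * Rabs (Tf p m N y (upd x (S k0) v)) <= (1-t)/2 * Bv p m N y) by (apply Rmult_le_compat_l; lra).
      lra. Qed.

Lemma Tf_bound p m N y x : 1 <= p -> inballs (conj_exp p) m x -> Rabs (Tf p m N y x) <= Bv p m N y.
Proof. intros Hp Hx. apply (claim p m N y (m*N)); auto. intros; nia. Qed.


Lemma chi01 N a : chi N a = 0 \/ chi N a = 1.
Proof. unfold chi; destruct Nat.ltb; auto. Qed.
Lemma fprod01 m (f : nat -> R) : (forall k, f k = 0 \/ f k = 1) -> fprod m f = 0 \/ fprod m f = 1.
Proof. intros H. induction m; simpl; auto. destruct IHm as [E|E]; rewrite E; destruct (H m) as [E'|E']; rewrite E'; lra. Qed.
Lemma fprod_chi01 m N (i' : nat -> nat) : fprod m (fun k => chi N (i' k)) = 0 \/ fprod m (fun k => chi N (i' k)) = 1.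
Proof. apply fprod01; intros; apply chi01. Qed.
Lemma fprod_chi_nn m N (i' : nat -> nat) : 0 <= fprod m (fun k => chi N (i' k)).
Proof. destruct (fprod_chi01 m N i') as [E|E]; rewrite E; lra. Qed.
Lemma pw01 c Y r : c = 0 \/ c = 1 -> pw (c * Y) r = c * pw Y r.
Proof. intros [E|E]; subst. rewrite Rmult_0_l, pw_0; ring. rewrite !Rmult_1_l; auto. Qed.
Lemma fsum_const n c : fsum n (fun _ => c) = INR n * c.
Proof. induction n; simpl fsum. simpl; ring. rewrite IHn, S_INR; ring. Qed.

Lemma Tf_e p m N y i1 (i' : nat -> nat) : (forall k, (m <= k)%nat -> i' k = O) ->
  Tf p m N y (fun j => e (scons i1 i' j)) =
  chi (2^(m*N)) i1 * (wgt p m N * (fprod m (fun k => chi N (i' k)) * (fprod m (fun k => sig i1 (k*N + i' k)%nat) * y i'))).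
Proof. intros Hz. unfold Tf.
  rewrite (fsum_ext _ _ (fun c => dlt c i1 * (wgt p m N * gz m N y (sig c) (fun k => e (i' k))))).
  2:{ intros c _. simpl. unfold e, dlt. reflexivity. }
  unfold dlt. rewrite fsum_delta. fold (chi (2^(m*N)) i1). f_equal. f_equal.
  unfold gz. rewrite <- (msum_delta m N i' (fun i => fprod m (fun k => sig i1 (k*N + i' k)%nat) * y i)) by auto.
  apply msum_ext; intros i _ _.
  rewrite (fprod_ext m _ (fun k => dlt (i k) (i' k) * sig i1 (k * N + i' k)%nat)).
  - rewrite fprod_mult. ring.
  - intros k _. unfold e, dlt. destruct (Nat.eqb (i k) (i' k)) eqn:E.
    apply Nat.eqb_eq in E. rewrite E. ring. all: ring. Qed.

Lemma INR_pow2 L : INR (2^L) = 2^L.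
Proof. rewrite pow_INR. replace (INR 2) with 2 by (simpl; ring). reflexivity. Qed.

Lemma mixed_val p m N y : 1 <= p ->
  mixed_trunc (S m) (conj_exp p) (Tf p m N y) (2^(m*N) + N) = sqrt (msum m N (fun i => Rabs (y i) ^ 2)).
Proof. intros Hp. unfold mixed_trunc. cbv zeta. rewrite dual_conj by auto.
  replace (S m - 1)%nat with m by lia. rewrite pw_half.
  2:{ apply msum_nonneg; intros; apply pw_nonneg. }
  f_equal. rewrite <- (msum_restrict m (2^(m*N) + N) N) by lia.
  apply msum_ext; intros i' _ Hz.
  rewrite (fsum_ext _ _ (fun i1 => chi (2^(m*N)) i1 * (/ 2^(m*N) * (fprod m (fun k => chi N (i' k)) * pw (Rabs (y i')) p)))).
  - unfold chi at 1. rewrite fsum_restrict by lia. rewrite fsum_const, INR_pow2.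
    replace (2 ^ (m * N) * (/ 2 ^ (m * N) * (fprod m (fun k => chi N (i' k)) * pw (Rabs (y i')) p)))
      with (fprod m (fun k => chi N (i' k)) * pw (Rabs (y i')) p) by (field; apply pow_nonzero; lra).
    rewrite pw01 by apply fprod_chi01.
    rewrite pw_pw by apply Rabs_pos. replace (p * (2/p)) with 2 by (field; lra).
    rewrite pw_2 by apply Rabs_pos. reflexivity.
  - intros i1 _. rewrite Tf_e by auto.
    rewrite !Rabs_mult. rewrite (Rabs_right (chi _ i1)) by (destruct (chi01 (2^(m*N)) i1) as [E|E]; rewrite E; lra).
    rewrite (Rabs_right (wgt p m N)) by (left; apply wgt_pos).
    rewrite (Rabs_right (fprod m (fun k => chi N (i' k)))) by (apply Rle_ge, fprod_chi_nn).
    rewrite fprod_sign by (intros; apply sig_sign). rewrite Rmult_1_l.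
    rewrite pw01 by apply chi01. rewrite pw_mult by (try (left; apply wgt_pos); apply Rmult_le_pos; try apply Rabs_pos; apply fprod_chi_nn).
    rewrite pw_wgt by lra. rewrite pw01 by apply fprod_chi01. reflexivity. Qed.

Definition Hf p m N y (x : nat -> nat -> R) : R :=
  pw (Rabs (msum m N (fun i => fprod m (fun k => x k (i k)) * y i))) p.

Lemma Hf_dep p m N y : depMK m N (Hf p m N y).
Proof. intros x x' E. unfold Hf. f_equal. f_equal. apply msum_ext; intros i Hi _. f_equal.
  apply fprod_ext; intros k Hk. apply E; auto. Qed.

Lemma Hf_MAvg p m N y : MAvg m N (Hf p m N y) = Avg (m*N) (Gm p m N y).
Proof. rewrite MAvg_flat by apply Hf_dep. f_equal. apply functional_extensionality; intros s.
  unfold Hf, Gm, gz. f_equal. f_equal. apply msum_ext; intros i _ _. f_equal. apply fprod_ext; intros; ring. Qed.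

Lemma zero_ball q : inBall q (fun _ => 0).
Proof. destruct q; simpl.
  - exists 0. split; [|lra]. intros eps He. exists O. intros n _.
    unfold Rdist. match goal with |- Rabs (sum_f_R0 ?f n - 0) < _ =>
      assert (Hs : sum_f_R0 f n = 0) by (induction n; simpl sum_f_R0; [rewrite Rabs_R0, pw_0; auto | rewrite IHn, Rabs_R0, pw_0; ring]) end.
    rewrite Hs, Rminus_0_r, Rabs_R0. lra.
  - split. intros eps He. exists O. intros n _. unfold Rdist. rewrite Rminus_0_r, Rabs_R0. lra.
    intros; rewrite Rabs_R0; lra. Qed.

Lemma core p m N y D : 1 <= p -> D_valid (S m) (conj_exp p) D ->
  exists s, 0 <= s <= Bv p m N y /\ sqrt (msum m N (fun i => Rabs (y i) ^ 2)) <= D * s.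
Proof. intros Hp HD.
  set (E := fun v => exists x, (forall j, (j < S m)%nat -> inBall (slot (conj_exp p) j) (x j)) /\ v = Rabs (Tf p m N y x)).
  assert (HB : bound E).
  { exists (Bv p m N y). intros v [x [Hx ->]]. apply Tf_bound; auto. }
  assert (H0 : E (Rabs (Tf p m N y (fun _ _ => 0)))).
  { exists (fun _ _ => 0). split; auto. intros; apply zero_ball. }
  destruct (completeness E HB (ex_intro _ _ H0)) as [s Hs].
  exists s. split. split.
  - eapply Rle_trans. apply Rabs_pos. apply (proj1 Hs). exact H0.
  - apply (proj2 Hs). intros v [x [Hx ->]]. apply Tf_bound; auto.
  - rewrite <- (mixed_val p m N y Hp). apply (HD (Tf p m N y)).
    + apply Tf_multilinear.
    + exists (Bv p m N y). intros x Hx. apply Tf_bound; auto.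
    + exact Hs. Qed.

Lemma msum_one m : msum m 1 (fun _ => 1) = 1.
Proof. induction m; simpl; auto. rewrite IHm; ring. Qed.

Lemma D_pos p m D : 1 <= p -> D_valid (S m) (conj_exp p) D -> 0 < D.
Proof. intros Hp HD. destruct (core p m 1 (fun _ => 1) D Hp HD) as [s [[Hs0 _] H]].
  rewrite (msum_ext m 1 _ (fun _ => 1)) in H by (intros; rewrite Rabs_R1; ring).
  rewrite msum_one, sqrt_1 in H. destruct (Rle_dec D 0); [|lra].
  assert (D * s <= 0) by nra. lra. Qed.

Lemma main1 p m D : 1 <= p -> D_valid (S m) (conj_exp p) D -> forall N y,
  IterInt m (fun t => Hf p m N y (fun k j => rad (S j) (t k))) (MAvg m N (Hf p m N y)) /\
  sqrt (msum m N (fun i => Rabs (y i) ^ 2)) <= D * pw (MAvg m N (Hf p m N y)) (1 / p).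
Proof. intros Hp HD N y. split.
  - apply Iter_main. apply Hf_dep.
  - rewrite Hf_MAvg. fold (Bv p m N y). destruct (core p m N y D Hp HD) as [s [Hs H]].
    pose proof (D_pos p m D Hp HD). eapply Rle_trans; [exact H|]. apply Rmult_le_compat_l; lra. Qed.


Lemma pw_fprod m (f : nat -> R) r : (forall k, 0 <= f k) -> pw (fprod m f) r = fprod m (fun k => pw (f k) r).
Proof. intros H. induction m; simpl.
  - rewrite pw_pos by lra. apply Rpower_one_l.
  - assert (0 <= fprod m f).
    { clear IHm. induction m; simpl; [lra|]. apply Rmult_le_pos; auto. }
    rewrite pw_mult by auto. rewrite IHm. auto. Qed.

Lemma fprod_const m c : fprod m (fun _ => c) = c ^ m.
Proof. induction m; simpl; auto. rewrite IHm; ring. Qed.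

Lemma pw_pow x n r : 0 <= x -> pw (x ^ n) r = (pw x r) ^ n.
Proof. intros Hx. induction n; simpl.
  - rewrite pw_pos by lra. apply Rpower_one_l.
  - rewrite pw_mult; auto. rewrite IHn; auto. apply pow_le; auto. Qed.

Lemma sqrt_pow x n : 0 <= x -> sqrt (x ^ n) = (sqrt x) ^ n.
Proof. intros Hx. induction n; simpl. apply sqrt_1.
  rewrite sqrt_mult; auto. rewrite IHn; auto. apply pow_le; auto. Qed.

Lemma pow_lt_S x y n : 0 <= x < y -> x ^ (S n) < y ^ (S n).
Proof. intros H. induction n. simpl; lra.
  change (x ^ S (S n)) with (x * x ^ S n). change (y ^ S (S n)) with (y * y ^ S n).
  assert (0 <= x ^ S n) by (apply pow_le; lra). nra. Qed.

Lemma Avg_nonneg K : forall F, (forall s, 0 <= F s) -> 0 <= Avg K F.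
Proof. induction K; intros F H; simpl; auto.
  assert (0 <= Avg K (fun s => F (scons 1 s))) by (apply IHK; auto).
  assert (0 <= Avg K (fun s => F (scons (-1) s))) by (apply IHK; auto). lra. Qed.

Lemma RInt01_unique f I1 I2 : RInt01 f I1 -> RInt01 f I2 -> I1 = I2.
Proof. intros [pr1 E1] [pr2 E2]. rewrite <- E1, <- E2. apply RiemannInt_P5. Qed.

Lemma A_ge1 p A : 1 <= p -> A_valid p A -> 1 <= A.
Proof. intros Hp HA.
  set (h := fun s : nat -> R => pw (Rabs (fsum 1 (fun k => 1 * s k))) p).
  assert (Hd : depK 1 h).
  { intros s s' E. unfold h. simpl. rewrite E by lia. auto. }
  pose proof (RInt01_of _ _ (Avg_int 1 h Hd)) as HI.
  pose proof (HA 1%nat (fun _ => 1) _ HI) as H.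
  assert (Hv : Avg 1 h = 1).
  { simpl. unfold h. simpl. replace (0 + 1 * 1) with 1 by ring. replace (0 + 1 * -1) with (-1) by ring.
    rewrite Rabs_R1. rewrite Rabs_left by lra. replace (- -1) with 1 by ring.
    rewrite pw_pos by lra. rewrite Rpower_one_l. field. }
  rewrite Hv in H. cbv beta in H. simpl fsum in H. replace (0 + 1 * (1 * 1)) with 1 in H by ring.
  rewrite sqrt_1 in H. rewrite pw_pos in H by lra. rewrite Rpower_one_l in H. lra. Qed.

Theorem theorem4p3 (p : R) (m : nat) (D : R) :
  1 <= p <= 2 -> (2 <= m)%nat ->
  D_opt (S m) (conj_exp p) D ->
  (forall (N : nat) (y : (nat -> nat) -> R),
     exists I : R,
       IterInt m (fun t => pw (Rabs (msum m N (fun i =>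
                    fprod m (fun k => rad (S (i k)) (t k)) * y i))) p) I /\
       sqrt (msum m N (fun i => Rabs (y i) ^ 2)) <= D * pw I (1 / p)) /\
  (forall A, A_opt p A -> A ^ m <= D).
Proof. intros Hp Hm [HD _]. assert (Hp1 : 1 <= p) by lra. split.
  - intros N y. exists (MAvg m N (Hf p m N y)). apply (main1 p m D Hp1 HD N y).
  - intros A [HA HAmin]. pose proof (D_pos p m D Hp1 HD) as HDp.
    pose proof (A_ge1 p A Hp1 HA) as HA1.
    set (d := Rpower D (/ INR m)).
    assert (Hmpos : 0 < INR m) by (apply lt_0_INR; lia).
    assert (Hd : 0 < d) by apply Rpower_pos.
    assert (Hdm : d ^ m = D).
    { unfold d. rewrite <- Rpower_pow by apply Rpower_pos. rewrite Rpower_mult.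
      replace (/ INR m * INR m) with 1 by (field; lra). apply Rpower_1; auto. }
    assert (Hval : A_valid p d).
    { intros n a I HI.
      set (h := fun s : nat -> R => pw (Rabs (fsum n (fun k => a (S k) * s k))) p).
      assert (Hdh : depK n h).
      { intros s s' E. unfold h. f_equal. f_equal. apply fsum_ext; intros. rewrite E; auto. }
      pose proof (RInt01_of _ _ (Avg_int n h Hdh)) as HI'.
      assert (EI : I = Avg n h) by (apply (RInt01_unique _ _ _ HI HI')).
      set (y := fun i : nat -> nat => fprod m (fun k => a (S (i k)))).
      destruct (main1 p m D Hp1 HD n y) as [_ H2].
      assert (EH : Hf p m n y = fun x => fprod m (fun k => h (x k))).
      { apply functional_extensionality; intros x. unfold Hf, y, h.
        rewrite (msum_ext m n _ (fun i => fprod m (fun k => x k (i k) * a (S (i k))))).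
        2:{ intros; rewrite fprod_mult; auto. }
        rewrite (msum_prod m n (fun k j => x k j * a (S j))). rewrite fprod_abs.
        rewrite pw_fprod by (intros; apply Rabs_pos). apply fprod_ext; intros k _.
        f_equal. f_equal. apply fsum_ext; intros; ring. }
      rewrite EH, MAvg_prod in H2.
      assert (EY : msum m n (fun i => Rabs (y i) ^ 2) = (fsum n (fun k => a (S k) ^ 2)) ^ m).
      { rewrite (msum_ext m n _ (fun i => fprod m (fun k => a (S (i k)) ^ 2))).
        - rewrite (msum_prod m n (fun k j => a (S j) ^ 2)). apply fprod_const.
        - intros i _ _. unfold y. rewrite pow2_abs.
          rewrite (fprod_ext m (fun k => a (S (i k)) ^ 2) (fun k => a (S (i k)) * a (S (i k)))) by (intros; ring).
          rewrite fprod_mult. ring. }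
      rewrite EY in H2. rewrite <- EI in H2.
      assert (HX : 0 <= fsum n (fun k => a (S k) ^ 2)) by (apply fsum_nonneg; intros; apply pow2_ge_0).
      assert (HI0 : 0 <= I) by (rewrite EI; apply Avg_nonneg; intros; apply pw_nonneg).
      rewrite sqrt_pow in H2 by auto. rewrite pw_pow in H2 by auto.
      set (u := sqrt (fsum n (fun k => a (S k) ^ 2))) in *.
      set (v := pw I (1/p)) in *.
      assert (Hu : 0 <= u) by apply sqrt_pos. assert (Hv : 0 <= v) by apply pw_nonneg.
      rewrite <- Hdm, <- Rpow_mult_distr in H2.
      destruct (Rle_dec u (d * v)) as [L|L]; auto. exfalso.
      destruct m as [|m']; [lia|].
      assert ((d * v) ^ S m' < u ^ S m') by (apply pow_lt_S; split; [apply Rmult_le_pos; lra| lra]). lra. }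
    pose proof (HAmin d Hval). rewrite <- Hdm. apply pow_incr. lra. Qed.
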